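(* Let $J\in\mathcal{D}(X)$, let $\ell$ be a positive integer, let $x\in X$, and let $\tilde u\in\tilde U(T^{\ell-1}J,x)$. Then $(T^\ell J)(f(x,\tilde u))\le(T^\ell J)(x)$.
   Context: Setting: $X$ (state space) and $U$ (control space) are sets; for each $x\in X$, $U(x)\subset U$ is nonempty; $f:X\times U\to X$; the stage cost $g$ satisfies $0\le g(x,u)\le\infty$ for all $x\in X$, $u\in U(x)$. $\mathcal{E}^+(X)$ denotes the set of all functions $J:X\to[0,\infty]$. The Bellman operator is $(TJ)(x)=\inf_{u\in U(x)}\{g(x,u)+J(f(x,u))\}$; $T^k$ is its $k$-fold composition, $T^0J=J$. The region of decreasing is $\mathcal{D}(X)=\{J\in\mathcal{E}^+(X): (TJ)(x)\le J(x)\ \forall x\in X\}$. For $J\in\mathcal{E}^+(X)$ and $x\in X$, $\tilde U(J,x)=\arg\min_{u\in U(x)}\{g(x,u)+J(f(x,u))\}$. Standing assumption: for every $J\in\mathcal{E}^+(X)$ and every $x\in X$, the infimum defining $(TJ)(x)$ is attained. *)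

(* Defs.v *)
From mathcomp Require Import all_boot all_order all_algebra.
From mathcomp Require Import all_classical all_reals ereal.
Set Implicit Arguments. Unset Strict Implicit. Unset Printing Implicit Defensive.
Import Order.TTheory GRing.Theory Num.Theory.
Local Open Scope classical_set_scope.
Local Open Scope ereal_scope.

Section Bellman.
Context {R : realType} {X U : Type}.
Variables (Uc : X -> set U) (f : X -> U -> X) (g : X -> U -> \bar R).

Definition nonnegfun (J : X -> \bar R) : Prop := forall x, 0 <= J x.

Definition bellman (J : X -> \bar R) : X -> \bar R :=
  fun x => ereal_inf [set g x u + J (f x u) | u in Uc x].

Definition bellman_iter (k : nat) (J : X -> \bar R) : X -> \bar R :=
  iter k bellman J.

Definition decreasing_region (J : X -> \bar R) : Prop :=
  nonnegfun J /\ forall x, bellman J x <= J x.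

Definition Utilde (J : X -> \bar R) (x : X) : set U :=
  [set u | Uc x u /\ forall v, Uc x v -> g x u + J (f x u) <= g x v + J (f x v)].
End Bellman.

(* Main.v *)
Require Import Defs.
From mathcomp Require Import all_boot all_order all_algebra.
From mathcomp Require Import all_classical all_reals ereal.
Local Open Scope classical_set_scope.
Local Open Scope ereal_scope.

Theorem corollary3 (R : realType) (X U : Type) (Uc : X -> set U)
  (f : X -> U -> X) (g : X -> U -> \bar R)
  (HU : forall x, Uc x !=set0)
  (Hg : forall x u, Uc x u -> 0 <= g x u)
  (Hattain : forall J : X -> \bar R, nonnegfun J -> forall x,
      exists2 u, Uc x u & g x u + J (f x u) = bellman Uc f g J x)
  (J : X -> \bar R) (HJ : decreasing_region Uc f g J)
  (l : nat) (Hl : (0 < l)%N) (x : X) (ut : U)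
  (Hut : Utilde Uc f g (bellman_iter Uc f g l.-1 J) x ut) :
  bellman_iter Uc f g l J (f x ut) <= bellman_iter Uc f g l J x.
Proof.
have mono : forall J1 J2 : X -> \bar R, (forall y, J1 y <= J2 y) ->
    forall y, bellman Uc f g J1 y <= bellman Uc f g J2 y.
  move=> J1 J2 H y; apply/ereal_infP => _ [u Hu <-].
  apply: ge_ereal_inf; exists (g y u + J1 (f y u)); first by exists u.
  exact: leeD2l.
have dec : forall k y, bellman_iter Uc f g k.+1 J y <= bellman_iter Uc f g k J y.
  elim=> [|k IH] y; first exact: HJ.2.
  exact: mono.
case: l Hl Hut => // l _ /= [Hu Hmin].
set K := bellman_iter Uc f g l J in Hu Hmin *.
change (bellman_iter Uc f g l.+1 J (f x ut) <= bellman Uc f g K x).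
apply: Order.le_trans (dec l (f x ut)) _.
apply/ereal_infP => _ [v Hv <-].
apply: Order.le_trans (Hmin v Hv).
have := leeD2r (K (f x ut)) (Hg _ _ Hu); by rewrite add0e.
Qed.
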